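(* For every even $n\ge2$ and every alphabet $\Sigma$, $\mathsf{sumPI}(\mathrm{Col})\le2$.
   Context: The collision problem $\mathrm{Col}$ is the partial function on $S\subseteq\Sigma^n$ where $S$ consists of the positive inputs, $x=x_1\cdots x_n$ with all $x_i$ distinct ($\mathrm{Col}(x)=1$), and the negative inputs, $x$ such that for each $i$ there is exactly one $j\neq i$ with $x_i=x_j$ ($\mathrm{Col}(x)=0$). For $f:S\to\{0,1\}$, $S\subseteq\Sigma^n$, with $p=\{p_x:x\in S\}$ ranging over families of probability distributions on $[n]$, $$\mathsf{sumPI}(f)=\min_{p}\ \max_{x,y\in S:\ f(x)\neq f(y)} \frac{1}{\sum_{i:\,x_i\neq y_i}\sqrt{p_x(i)p_y(i)}}.$$ *)

(* Defs.v *)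
From mathcomp Require Import all_boot all_order all_algebra.
From mathcomp Require Import all_classical all_reals ereal.
Set Implicit Arguments. Unset Strict Implicit. Unset Printing Implicit Defensive.
Import Order.TTheory GRing.Theory Num.Theory.
Local Open Scope ring_scope.
Local Open Scope classical_set_scope.

Definition col_pos (Sigma : eqType) (n : nat) (x : 'I_n -> Sigma) : Prop :=
  forall i j : 'I_n, x i = x j -> i = j.

Definition col_neg (Sigma : eqType) (n : nat) (x : 'I_n -> Sigma) : Prop :=
  forall i : 'I_n, exists! j : 'I_n, j <> i /\ x i = x j.

(* Domain S of the partial function Col. *)
Definition col_dom (Sigma : eqType) (n : nat) (x : 'I_n -> Sigma) : Prop :=
  col_pos x \/ col_neg x.

(* Col x = 1 (true) on positive inputs, 0 (false) on negative ones. *)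
Definition Col (Sigma : eqType) (n : nat) (x : 'I_n -> Sigma) : bool :=
  [forall i : 'I_n, [forall j : 'I_n, (x i == x j) ==> (i == j)]].

Definition is_distr (R : realType) (n : nat) (q : 'I_n -> R) : Prop :=
  (forall i, 0 <= q i) /\ \sum_(i < n) q i = 1.

Definition inv_bar (R : realType) (s : R) : \bar R :=
  if s == 0 then +oo%E else (s^-1)%:E.

Definition sumPI_obj (R : realType) (Sigma : eqType) (n : nat)
    (S : ('I_n -> Sigma) -> Prop) (f : ('I_n -> Sigma) -> bool)
    (p : ('I_n -> Sigma) -> 'I_n -> R) : \bar R :=
  ereal_sup [set v | exists x y, [/\ S x, S y, f x != f y &
     v = inv_bar (\sum_(i < n | x i != y i) Num.sqrt (p x i * p y i))]].

Definition sumPI (R : realType) (Sigma : eqType) (n : nat)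
    (S : ('I_n -> Sigma) -> Prop) (f : ('I_n -> Sigma) -> bool) : \bar R :=
  ereal_inf [set sumPI_obj S f p | p in
     [set p : ('I_n -> Sigma) -> 'I_n -> R | forall x, S x -> is_distr (p x)]].

(* Main.v *)
Require Import Defs.
From mathcomp Require Import all_boot all_order all_algebra.
From mathcomp Require Import all_classical all_reals ereal.
From mathcomp Require Import zify.
Import Order.TTheory GRing.Theory Num.Theory.

Lemma key (Sigma : eqType) (n : nat) (x y : 'I_n -> Sigma) :
  col_pos x -> col_neg y -> (n <= 2 * #|[pred i | x i != y i]|)%N.
Proof.
move=> px ny.
pose m i := odflt i [pick j | (j != i) && (y i == y j)].
have mP i : m i <> i /\ y i = y (m i).
  rewrite /m; case: pickP => [j /andP[/eqP h /eqP e]|h] //=.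
  have [j [[h1 h2] _]] := ny i.
  by move: (h j); rewrite h2 eqxx andbT; move/eqP: h1 => ->.
have mm i : m (m i) = i.
  have [j [_ u]] := ny (m i).
  have [h1 h2] := mP (m i); have [h3 h4] := mP i.
  have e1 := u _ (conj h1 h2).
  have e2 : j = i by apply: u; split; [move=> e; apply: h3; rewrite -e | rewrite -h4].

  by rewrite -e1 e2.
have minj : injective m by apply: (can_inj mm).
pose A := [set i | x i == y i].
have sub : [set m i | i in A] \subset ~: A.
  apply/fintype.subsetP => _ /imsetP[i iA ->]; rewrite !inE in iA *.
  apply/negP => /eqP e; move/eqP: iA => e'.
  have [h1 h2] := mP i; apply: h1; apply: px.
  by rewrite e e' h2.
have c1 := subset_leq_card sub; rewrite card_imset // in c1.
have c2 := cardsC A; rewrite card_ord in c2.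
have -> : #|[pred i | x i != y i]| = #|~: A|.
  by apply: eq_card => i; rewrite !inE.
lia.
Qed.

Lemma Col_pos (Sigma : eqType) (n : nat) (x : 'I_n -> Sigma) :
  col_dom x -> Col x = true <-> col_pos x.
Proof.
move=> _; split.
  by move=> /forallP h i j e; have /forallP/(_ j) := h i; rewrite e eqxx /= => /eqP.
move=> h; apply/forallP => i; apply/forallP => j; apply/implyP => /eqP e.
by rewrite (h _ _ e).
Qed.

Theorem mainTheorem18 (R : realType) (Sigma : eqType) (n : nat) :
  (2 <= n)%N -> ~~ odd n ->
  (@sumPI R Sigma n (@col_dom Sigma n) (@Col Sigma n) <= (2%:R)%:E)%E.
Proof.
move=> n2 _.
have n0 : (0 < (n%:R : R))%R by rewrite ltr0n; lia.
pose p := fun (_ : 'I_n -> Sigma) (_ : 'I_n) => ((n%:R)^-1 : R)%R.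
apply: (@le_trans _ _ (sumPI_obj (@col_dom Sigma n) (@Col Sigma n) p)).
  apply: ereal_inf_lbound; exists p => //.
  move=> x _; split; first by move=> i; rewrite /p invr_ge0 ltW.
  by rewrite /p sumr_const card_ord -[LHS]mulr_natl mulfV // gt_eqF.
rewrite /sumPI_obj; apply: ge_ereal_sup => _ [x [y [dx dy fxy ->]]].
have hk : (n <= 2 * #|[pred i | x i != y i]|)%N.
  case Ex: (Col x); case Ey: (Col y); rewrite ?Ex ?Ey // in fxy.
  - apply: key; first exact: (@Col_pos _ _ x dx).1 Ex.
    case: (dy) => // h; have := (@Col_pos _ _ y dy).2 h; by rewrite Ey.
  - have -> : #|[pred i | x i != y i]| = #|[pred i | y i != x i]|.
      by apply: eq_card => i; rewrite !inE eq_sym.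
    apply: key; first exact: (@Col_pos _ _ y dy).1 Ey.
    case: (dx) => // h; have := (@Col_pos _ _ x dx).2 h; by rewrite Ex.
have -> : (\sum_(i < n | x i != y i) Num.sqrt (p x i * p y i)
   = (n%:R)^-1 *+ #|[pred i | x i != y i]|)%R.
  rewrite -sumr_const; apply: eq_bigr => i _.
  by rewrite /p -expr2 sqrtr_sqr ger0_norm // invr_ge0 ltW.
set k := #|_| in hk *.
have k0 : (0 < k)%N by lia.
rewrite /inv_bar.
have e : (((n%:R)^-1 : R) *+ k = k%:R / n%:R)%R.
  by rewrite [RHS]mulrC mulr_natr.
rewrite e.
have -> : (k%:R / n%:R == 0 :> R)%R = false.
  by rewrite mulf_eq0 invr_eq0 !pnatr_eq0; apply/negbTE; lia.
rewrite lee_fin invf_div ler_pdivrMr ?ltr0n //.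
by move: hk; rewrite -(ler_nat R) natrM.
Qed.
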